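(* Let $p=0\in\mathbb{R}^2$ and for a function $u$ set $M_u(r)=\max_{|x|\le r}|u(x)|$. Let $\alpha\in(0,1)$, and suppose that for given $k>0$ and $r>0$ there is a constant $C(k,r,\alpha)$ such that every solution $u$ of the Helmholtz equation $\Delta u+k^2u=0$ on $\mathbb{R}^2$ satisfies \[M_u(2r)\le C(k,r,\alpha)\,M_u(r)^{\alpha}M_u(4r)^{1-\alpha}.\] Then $C(k,r,\alpha)\ge c\,e^{d\alpha kr}$, where $c>0$ and $d>0$ are absolute constants (independent of $k$, $r$, $\alpha$).
   Context: $\Delta$ is the Euclidean Laplacian on $\mathbb{R}^2$. *)

(* Defs.v *)
From Stdlib Require Import Reals.
From Coquelicot Require Import Coquelicot.
Open Scope R_scope.

Definition dx (u : R -> R -> R) : R -> R -> R :=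
  fun x y => Derive (fun t => u t y) x.
Definition dy (u : R -> R -> R) : R -> R -> R :=
  fun x y => Derive (fun t => u x t) y.

Definition cont2 (f : R -> R -> R) : Prop :=
  forall p : R * R, continuous (fun q : R * R => f (fst q) (snd q)) p.

Definition has_partials (f : R -> R -> R) : Prop :=
  (forall x y, ex_derive (fun t => f t y) x) /\
  (forall x y, ex_derive (fun t => f x t) y).

Definition C2 (u : R -> R -> R) : Prop :=
  cont2 u /\ has_partials u /\ cont2 (dx u) /\ cont2 (dy u) /\
  has_partials (dx u) /\ has_partials (dy u) /\
  cont2 (dx (dx u)) /\ cont2 (dy (dx u)) /\
  cont2 (dx (dy u)) /\ cont2 (dy (dy u)).

Definition laplacian (u : R -> R -> R) : R -> R -> R :=
  fun x y => dx (dx u) x y + dy (dy u) x y.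

Definition helmholtz_sol (k : R) (u : R -> R -> R) : Prop :=
  C2 u /\ forall x y, laplacian u x y + k ^ 2 * u x y = 0.

(* M_u(r) = max_{|x| <= r} |u(x)|, with |.| the Euclidean norm
   (the sup of a continuous function on a compact disk, i.e. the max). *)
Definition Mu (u : R -> R -> R) (r : R) : R :=
  real (Lub_Rbar (fun z => exists x y, x ^ 2 + y ^ 2 <= r ^ 2 /\ z = Rabs (u x y))).

(* a^b for a >= 0 and b > 0, with the convention 0^b = 0. *)
Definition rpow (a b : R) : R :=
  if Rle_dec a 0 then 0 else Rpower a b.

(* Main.v *)
Require Import Defs.
From Stdlib Require Import Reals.
From Coquelicot Require Import Coquelicot.
Open Scope R_scope.
From Stdlib Require Import Lra Lia Psatz ZArith FunctionalExtensionality.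
Open Scope R_scope.

Fixpoint rsum (f : nat -> R) (n : nat) : R :=
  match n with O => 0 | S n => rsum f n + f n end.

Lemma rsum_ext f g n : (forall i, (i < n)%nat -> f i = g i) -> rsum f n = rsum g n.
Proof. induction n; simpl; intros; auto. rewrite IHn, H; auto. Qed.

Lemma rsum_plus f g n : rsum (fun i => f i + g i) n = rsum f n + rsum g n.
Proof. induction n; simpl; [lra|]. rewrite IHn; lra. Qed.

Lemma rsum_minus f g n : rsum (fun i => f i - g i) n = rsum f n - rsum g n.
Proof. induction n; simpl; [lra|]. rewrite IHn; lra. Qed.

Lemma rsum_scal c f n : rsum (fun i => c * f i) n = c * rsum f n.
Proof. induction n; simpl; [lra|]. rewrite IHn; lra. Qed.

Lemma rsum_le f g n : (forall i, (i < n)%nat -> f i <= g i) -> rsum f n <= rsum g n.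
Proof. induction n; simpl; intros; [lra|]. apply Rplus_le_compat; auto. Qed.

Lemma rsum_abs f n : Rabs (rsum f n) <= rsum (fun i => Rabs (f i)) n.
Proof. induction n; simpl. rewrite Rabs_R0; lra.
  eapply Rle_trans. apply Rabs_triang. lra. Qed.

Lemma rsum_nonneg f n : (forall i, (i < n)%nat -> 0 <= f i) -> 0 <= rsum f n.
Proof. induction n; simpl; intros; [lra|]. assert (0 <= f n) by auto.
  assert (0 <= rsum f n) by auto. lra. Qed.

Lemma rsum_ge_term f n j : (forall i, (i < n)%nat -> 0 <= f i) -> (j < n)%nat -> f j <= rsum f n.
Proof. induction n; simpl; intros. lia.
  destruct (Nat.eq_dec j n). subst. assert (0 <= rsum f n) by (apply rsum_nonneg; auto). lra.
  assert (f j <= rsum f n) by (apply IHn; auto; lia). assert (0 <= f n) by auto. lra. Qed.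


Lemma is_derive_plusR (f g : R -> R) x a b : is_derive f x a -> is_derive g x b ->
  is_derive (fun t => f t + g t) x (a + b).
Proof. intros; apply (is_derive_plus f g); auto. Qed.

Definition TS (n : nat) (c a b d : nat -> R) (x y : R) : R :=
  rsum (fun j => c j * cos (a j * x + b j * y + d j)) n.

Lemma TS_dx n c a b d x y :
  is_derive (fun t => TS n c a b d t y) x (TS n (fun j => c j * a j) a b (fun j => d j + PI/2) x y).
Proof.
  induction n; unfold TS; simpl.
  - apply (is_derive_const 0).
  - apply is_derive_plusR. apply IHn.
    replace (a n * x + b n * y + (d n + PI / 2)) with ((a n * x + b n * y + d n) + PI/2) by ring.
    rewrite cos_plus, cos_PI2, sin_PI2.
    auto_derive; auto. ring.
Qed.

Lemma TS_dy n c a b d x y :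
  is_derive (fun t => TS n c a b d x t) y (TS n (fun j => c j * b j) a b (fun j => d j + PI/2) x y).
Proof.
  induction n; unfold TS; simpl.
  - apply (is_derive_const 0).
  - apply is_derive_plusR. apply IHn.
    replace (a n * x + b n * y + (d n + PI / 2)) with ((a n * x + b n * y + d n) + PI/2) by ring.
    rewrite cos_plus, cos_PI2, sin_PI2.
    auto_derive; auto. ring.
Qed.

Lemma dx_TS n c a b d : dx (TS n c a b d) = TS n (fun j => c j * a j) a b (fun j => d j + PI/2).
Proof. apply functional_extensionality; intro x; apply functional_extensionality; intro y.
  unfold dx. apply is_derive_unique. apply TS_dx. Qed.

Lemma dy_TS n c a b d : dy (TS n c a b d) = TS n (fun j => c j * b j) a b (fun j => d j + PI/2).
Proof. apply functional_extensionality; intro x; apply functional_extensionality; intro y.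
  unfold dy. apply is_derive_unique. apply TS_dy. Qed.

Lemma cont2_TS n c a b d : cont2 (TS n c a b d).
Proof.
  intros p. induction n; unfold TS; simpl.
  - apply continuous_const.
  - apply (continuous_plus (fun q : R*R => rsum (fun j => c j * cos (a j * fst q + b j * snd q + d j)) n)
      (fun q : R*R => c n * cos (a n * fst q + b n * snd q + d n))). apply IHn.
    apply (continuous_mult (fun _ : R*R => c n) (fun q : R*R => cos (a n * fst q + b n * snd q + d n))).
    apply continuous_const.
    apply continuous_comp with (g := cos). 2: apply continuous_cos.
    apply (continuous_plus (fun q : R*R => a n * fst q + b n * snd q) (fun _ => d n)). 2: apply continuous_const.
    apply (continuous_plus (fun q : R*R => a n * fst q) (fun q : R*R => b n * snd q)).
    apply (continuous_mult (fun _ : R*R => a n) (fun q : R*R => fst q)). apply continuous_const.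
    destruct p; apply continuous_fst.
    apply (continuous_mult (fun _ : R*R => b n) (fun q : R*R => snd q)). apply continuous_const.
    destruct p; apply continuous_snd.
Qed.

Lemma partials_TS n c a b d : has_partials (TS n c a b d).
Proof. split; intros x y. eexists; apply TS_dx. eexists; apply TS_dy. Qed.

Lemma C2_TS n c a b d : C2 (TS n c a b d).
Proof.
  unfold C2. repeat (rewrite ?dx_TS, ?dy_TS).
  repeat split; try apply cont2_TS; apply partials_TS.
Qed.

Lemma helm_TS k n c a b d : (forall j, (j < n)%nat -> a j ^ 2 + b j ^ 2 = k ^ 2) ->
  helmholtz_sol k (TS n c a b d).
Proof.
  intros H. split. apply C2_TS. intros x y. unfold laplacian.
  rewrite !dx_TS, !dy_TS. unfold TS. rewrite <- rsum_plus, <- rsum_scal, <- rsum_plus.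
  replace 0 with (rsum (fun _ => 0) n) by (induction n; simpl; auto; rewrite IHn; auto; lra).
  apply rsum_ext; intros j Hj.
  replace (a j * x + b j * y + (d j + PI / 2 + PI / 2)) with ((a j * x + b j * y + d j) + PI) by (field).
  rewrite neg_cos. rewrite <- (H j Hj). ring.
Qed.

Lemma Mu_bounds (u : R -> R -> R) (rho K : R) :
  (forall x y, x ^ 2 + y ^ 2 <= rho ^ 2 -> Rabs (u x y) <= K) ->
  Mu u rho <= K /\ (forall x y, x ^ 2 + y ^ 2 <= rho ^ 2 -> Rabs (u x y) <= Mu u rho).
Proof.
  intros HK. unfold Mu.
  set (E := fun z => exists x y, x ^ 2 + y ^ 2 <= rho ^ 2 /\ z = Rabs (u x y)).
  destruct (Lub_Rbar_correct E) as [Hub Hlub].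
  assert (H0 : E (Rabs (u 0 0))). { exists 0, 0. split; auto. nra. }
  assert (Hle : Rbar_le (Lub_Rbar E) K). { apply Hlub. intros z [x [y [Hx ->]]]. simpl. auto. }
  assert (Hge : Rbar_le (Rabs (u 0 0)) (Lub_Rbar E)) by (apply Hub; auto).
  destruct (Lub_Rbar E) as [l| |] eqn:HL; simpl in *; try contradiction.
  split; auto. intros x y Hxy.
  assert (H1 : Rbar_le (Rabs (u x y)) l) by (apply Hub; exists x, y; auto).
  simpl in H1. auto.
Qed.

Lemma nondecr_from_deriv (f df : R -> R) (a b : R) :
  a <= b -> (forall t, is_derive f t (df t)) -> (forall t, a <= t <= b -> 0 <= df t) -> f a <= f b.
Proof.
  intros Hab Hd Hpos.
  destruct (MVT_gen f a b df) as [c [Hc Heq]].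
  - intros; apply Hd.
  - intros x _. apply continuity_pt_filterlim. apply (ex_derive_continuous f). eexists; apply Hd.
  - rewrite Rmin_left, Rmax_right in Hc by lra.
    assert (0 <= df c) by (apply Hpos; lra). nra.
Qed.

Lemma vec_mvt (g1 g2 d1 d2 H h : R -> R) (s : R) : 0 <= s ->
  g1 0 = 0 -> g2 0 = 0 -> H 0 = 0 ->
  (forall t, is_derive g1 t (d1 t)) -> (forall t, is_derive g2 t (d2 t)) ->
  (forall t, is_derive H t (h t)) ->
  (forall t, 0 <= t <= s -> sqrt (d1 t ^ 2 + d2 t ^ 2) <= h t) ->
  sqrt (g1 s ^ 2 + g2 s ^ 2) <= H s.
Proof.
  intros Hs H1 H2 H0 D1 D2 DH Hb.
  set (m := sqrt (g1 s ^ 2 + g2 s ^ 2)).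
  assert (Hm0 : 0 <= m) by apply sqrt_pos.
  assert (Hmm : m * m = g1 s ^ 2 + g2 s ^ 2) by (apply sqrt_sqrt; nra).
  assert (HH : 0 <= H s).
  { rewrite <- H0. apply (nondecr_from_deriv H h 0 s Hs DH).
    intros t Ht. eapply Rle_trans. apply sqrt_pos. apply Hb; auto. }
  set (psi := fun t => m * H t - (g1 s * g1 t + g2 s * g2 t)).
  assert (Hpsi : psi 0 <= psi s).
  { apply (nondecr_from_deriv psi (fun t => m * h t - (g1 s * d1 t + g2 s * d2 t)) 0 s Hs).
    - intros t. unfold psi. auto_derive_fun (fun t => m * H t - (g1 s * g1 t + g2 s * g2 t)).
      intros Hd. eapply is_derive_ext. intros; reflexivity.
      apply @is_derive_minus. apply @is_derive_scal. apply DH.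
      apply @is_derive_plus; apply @is_derive_scal; auto.
    - intros t Ht. assert (C := sqrt_cauchy (g1 s) (g2 s) (d1 t) (d2 t)).
      unfold Rsqr in C. replace (g1 s * g1 s + g2 s * g2 s) with (g1 s ^ 2 + g2 s ^ 2) in C by ring.
      replace (d1 t * d1 t + d2 t * d2 t) with (d1 t ^ 2 + d2 t ^ 2) in C by ring.
      fold m in C. assert (Hb' := Hb t Ht). nra. }
  unfold psi in Hpsi. rewrite H0, H1, H2 in Hpsi.
  destruct (Req_dec m 0) as [Z|NZ]. rewrite Z. auto.
  assert (m * m <= m * H s) by nra.
  apply Rmult_le_reg_l with m. lra. lra.
Qed.

Definition cexp (z : C) : C := (exp (fst z) * cos (snd z), exp (fst z) * sin (snd z)).
Fixpoint csum (f : nat -> C) (n : nat) : C :=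
  match n with O => RtoC 0 | S n => Cplus (csum f n) (f n) end.
Definition T (N : nat) (z : C) : C := csum (fun n => Cmult (RtoC (/ INR (Factorial.fact n))) (Cpow z n)) N.

Lemma fst_csum f n : fst (csum f n) = rsum (fun i => fst (f i)) n.
Proof. induction n; simpl; auto. rewrite IHn; auto. Qed.
Lemma snd_csum f n : snd (csum f n) = rsum (fun i => snd (f i)) n.
Proof. induction n; simpl; auto. rewrite IHn; auto. Qed.
Lemma Cmod_csum f n : Cmod (csum f n) <= rsum (fun i => Cmod (f i)) n.
Proof. induction n; simpl. rewrite Cmod_0; lra.
  eapply Rle_trans. apply Cmod_triangle. lra. Qed.

Lemma Cmod_cexp z : Cmod (cexp z) = exp (fst z).
Proof. unfold Cmod, cexp. cbn [fst snd].
  replace ((exp (fst z) * cos (snd z)) ^ 2 + (exp (fst z) * sin (snd z)) ^ 2) with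
   (exp (fst z) ^ 2 * (sin (snd z) ^ 2 + cos (snd z) ^ 2)) by ring.
  rewrite <- !Rsqr_pow2, sin2_cos2, Rmult_1_r. apply sqrt_Rsqr. left; apply exp_pos. Qed.

Lemma cexp_add z w : cexp (Cplus z w) = Cmult (cexp z) (cexp w).
Proof. destruct z as [a b], w as [c d]. unfold cexp, Cplus, Cmult; simpl.
  rewrite exp_plus, cos_plus, sin_plus. f_equal; ring. Qed.

Lemma rsum_poly_derive (c : nat -> R) N (s : R) :
  is_derive (fun s => rsum (fun n => s ^ n / INR (Factorial.fact n) * c n) (S N)) s
    (rsum (fun n => s ^ n / INR (Factorial.fact n) * c (S n)) N).
Proof.
  induction N.
  - simpl. auto_derive; auto.
  - change (rsum (fun n => s ^ n / INR (Factorial.fact n) * c (S n)) (S N)) with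
      (rsum (fun n => s ^ n / INR (Factorial.fact n) * c (S n)) N + s ^ N / INR (Factorial.fact N) * c (S N)).
    eapply is_derive_ext. intros t. symmetry. change (rsum (fun n : nat => t ^ n / INR (Factorial.fact n) * c n) (S (S N))) with
      (rsum (fun n : nat => t ^ n / INR (Factorial.fact n) * c n) (S N) + t ^ (S N) / INR (Factorial.fact (S N)) * c (S N)). reflexivity.
    apply is_derive_plusR. apply IHN.
    assert (INR (Factorial.fact N) <> 0) by (apply not_0_INR; apply Factorial.fact_neq_0).
    auto_derive; auto.
    change (match N with 0%nat => 1 | S _ => INR N + 1 end) with (INR (S N)).
    replace (Factorial.fact N + N * Factorial.fact N)%nat with (S N * Factorial.fact N)%nat by ring.
    rewrite mult_INR. field. split; auto. apply not_0_INR. lia.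
Qed.

Lemma rsum_poly_0 (c : nat -> R) N : rsum (fun n => 0 ^ n / INR (Factorial.fact n) * c n) (S N) = c O.
Proof. induction N. simpl. field. change (rsum (fun n => 0 ^ n / INR (Factorial.fact n) * c n) (S N) +
   0 ^ (S N) / INR (Factorial.fact (S N)) * c (S N) = c O). rewrite IHN.
  rewrite pow_i by lia. unfold Rdiv; ring. Qed.

Section Taylor.
Variable z : C.
Let a := fst z.
Let b := snd z.
Let m := Cmod z.
Definition G1 N s := exp (s * a) * cos (s * b) - rsum (fun n => s ^ n / INR (Factorial.fact n) * fst (Cpow z n)) N.
Definition G2 N s := exp (s * a) * sin (s * b) - rsum (fun n => s ^ n / INR (Factorial.fact n) * snd (Cpow z n)) N.
Definition HT N s := (s * m) ^ N / INR (Factorial.fact N) * exp (s * m).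

Lemma G1_d N (s : R) : is_derive (G1 (S N)) s (a * G1 N s - b * G2 N s).
Proof.
  unfold G1, G2. eapply is_derive_ext. intros; reflexivity.
  replace (a * (exp (s * a) * cos (s * b) - rsum (fun n : nat => s ^ n / INR (Factorial.fact n) * fst (Cpow z n)) N) -
   b * (exp (s * a) * sin (s * b) - rsum (fun n : nat => s ^ n / INR (Factorial.fact n) * snd (Cpow z n)) N))
   with ((a * exp (s * a) * cos (s * b) - b * exp (s * a) * sin (s * b)) -
     rsum (fun n : nat => s ^ n / INR (Factorial.fact n) * fst (Cpow z (S n))) N).
  2:{ simpl. assert (Hs : rsum (fun n => s ^ n / INR (Factorial.fact n) * (fst z * fst (Cpow z n) - snd z * snd (Cpow z n))) N
       = a * rsum (fun n => s ^ n / INR (Factorial.fact n) * fst (Cpow z n)) N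
       - b * rsum (fun n => s ^ n / INR (Factorial.fact n) * snd (Cpow z n)) N).
      { rewrite <- !rsum_scal, <- rsum_minus. apply rsum_ext; intros; unfold a, b; ring. }
      rewrite Hs; ring. }
  apply (is_derive_minus (fun s => exp (s * a) * cos (s * b))).
  auto_derive; auto; ring.
  apply rsum_poly_derive.
Qed.

Lemma G2_d N (s : R) : is_derive (G2 (S N)) s (a * G2 N s + b * G1 N s).
Proof.
  unfold G1, G2. eapply is_derive_ext. intros; reflexivity.
  replace (a * (exp (s * a) * sin (s * b) - rsum (fun n : nat => s ^ n / INR (Factorial.fact n) * snd (Cpow z n)) N) +
   b * (exp (s * a) * cos (s * b) - rsum (fun n : nat => s ^ n / INR (Factorial.fact n) * fst (Cpow z n)) N))
   with ((a * exp (s * a) * sin (s * b) + b * exp (s * a) * cos (s * b)) -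
     rsum (fun n : nat => s ^ n / INR (Factorial.fact n) * snd (Cpow z (S n))) N).
  2:{ simpl. assert (Hs : rsum (fun n => s ^ n / INR (Factorial.fact n) * (fst z * snd (Cpow z n) + snd z * fst (Cpow z n))) N
       = a * rsum (fun n => s ^ n / INR (Factorial.fact n) * snd (Cpow z n)) N
       + b * rsum (fun n => s ^ n / INR (Factorial.fact n) * fst (Cpow z n)) N).
      { rewrite <- !rsum_scal, <- rsum_plus. apply rsum_ext; intros; unfold a, b; ring. }
      rewrite Hs; ring. }
  apply (is_derive_minus (fun s => exp (s * a) * sin (s * b))).
  auto_derive; auto; ring.
  apply rsum_poly_derive.
Qed.

Lemma HT_d N (s : R) : is_derive (HT (S N)) s (m * (s * m) ^ N / INR (Factorial.fact N) * exp (s * m) + m * HT (S N) s).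
Proof.
  unfold HT. assert (INR (Factorial.fact N) <> 0) by (apply not_0_INR; apply Factorial.fact_neq_0).
  auto_derive; auto.
  change (match N with 0%nat => 1 | S _ => INR N + 1 end) with (INR (S N)).
  change (Factorial.fact (S N)) with (Factorial.fact N + N * Factorial.fact N)%nat.
  replace (Factorial.fact N + N * Factorial.fact N)%nat with (S N * Factorial.fact N)%nat by ring.
  rewrite mult_INR. simpl pow. field. split; auto. apply not_0_INR. lia.
Qed.

Lemma m_nonneg : 0 <= m.
Proof. apply Cmod_ge_0. Qed.

Lemma taylor_s N : forall s, 0 <= s -> sqrt (G1 N s ^ 2 + G2 N s ^ 2) <= HT N s.
Proof.
  induction N; intros s Hs.
  - unfold G1, G2, HT; simpl rsum. rewrite !Rminus_0_r.
    replace ((exp (s * a) * cos (s * b)) ^ 2 + (exp (s * a) * sin (s * b)) ^ 2) with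
      (exp (s * a) ^ 2 * (sin (s * b) ^ 2 + cos (s * b) ^ 2)) by ring.
    rewrite <- !Rsqr_pow2, sin2_cos2, Rmult_1_r, sqrt_Rsqr by (left; apply exp_pos).
    replace ((s * m) ^ 0 / INR (Factorial.fact 0) * exp (s * m)) with (exp (s * m)) by (simpl; field).
    assert (a <= m). { unfold a, m, Cmod. destruct z as [x y]; simpl.
      apply Rle_trans with (Rabs x). apply Rle_abs. rewrite <- sqrt_Rsqr_abs. apply sqrt_le_1_alt.
      unfold Rsqr; nra. }
    destruct (Rle_lt_or_eq_dec _ _ (Rmult_le_compat_l s _ _ Hs H)) as [L|E]. left; apply exp_increasing; auto.
    rewrite E; lra.
  - apply (vec_mvt (G1 (S N)) (G2 (S N)) (fun t => a * G1 N t - b * G2 N t) (fun t => a * G2 N t + b * G1 N t)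
      (HT (S N)) (fun t => m * (t * m) ^ N / INR (Factorial.fact N) * exp (t * m) + m * HT (S N) t)); auto.
    + unfold G1. rewrite rsum_poly_0. rewrite !Rmult_0_l, exp_0, cos_0. simpl; ring.
    + unfold G2. rewrite rsum_poly_0. rewrite !Rmult_0_l, exp_0, sin_0. simpl; ring.
    + unfold HT. rewrite Rmult_0_l, pow_i by lia. unfold Rdiv; ring.
    + apply G1_d.
    + apply G2_d.
    + apply HT_d.
    + intros t Ht.
      assert (E : sqrt ((a * G1 N t - b * G2 N t) ^ 2 + (a * G2 N t + b * G1 N t) ^ 2) =
                  m * sqrt (G1 N t ^ 2 + G2 N t ^ 2)).
      { assert (Hc := Cmod_mult z (G1 N t, G2 N t)). unfold Cmod, Cmult in Hc; cbn [fst snd] in Hc.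
        unfold m, Cmod. rewrite <- Hc. reflexivity. }
      rewrite E. assert (IH := IHN t (proj1 Ht)). unfold HT in *.
      assert (0 <= m * ((t * m) ^ S N / INR (Factorial.fact (S N)) * exp (t * m))).
      { apply Rmult_le_pos. apply m_nonneg. apply Rmult_le_pos. apply Rmult_le_pos.
        apply pow_le. apply Rmult_le_pos. lra. apply m_nonneg. left; apply Rinv_0_lt_compat, lt_0_INR, Factorial.lt_O_fact.
        left; apply exp_pos. }
      assert (m * sqrt (G1 N t ^ 2 + G2 N t ^ 2) <= m * ((t * m) ^ N / INR (Factorial.fact N) * exp (t * m))).
      { apply Rmult_le_compat_l. apply m_nonneg. auto. }
      lra.
Qed.
End Taylor.

Lemma Cpow_RtoC_mult (s : R) (z : C) n : Cpow (Cmult (RtoC s) z) n = Cmult (RtoC (s ^ n)) (Cpow z n).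
Proof. induction n; simpl. unfold RtoC, Cmult; simpl; f_equal; ring.
  rewrite IHn. unfold RtoC, Cmult; simpl. f_equal; ring. Qed.

Lemma taylor_bound (z : C) N :
  Cmod (Cminus (cexp z) (T N z)) <= Cmod z ^ N / INR (Factorial.fact N) * exp (Cmod z).
Proof.
  assert (H := taylor_s z N 1 ltac:(lra)). unfold HT in H. rewrite !Rmult_1_l in H.
  eapply Rle_trans; [|apply H]. right. unfold Cmod. f_equal.
  unfold G1, G2, T, Cminus, Cplus, Copp, cexp. simpl. rewrite fst_csum, snd_csum. rewrite !Rmult_1_l.
  rewrite (rsum_ext (fun i => fst _) (fun n => 1 ^ n / INR (Factorial.fact n) * fst (Cpow z n)))
    by (intros; simpl; rewrite pow1; unfold Rdiv; rewrite Rmult_1_l; lra).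
  rewrite (rsum_ext (fun i => snd _) (fun n => 1 ^ n / INR (Factorial.fact n) * snd (Cpow z n)))
    by (intros; simpl; rewrite pow1; unfold Rdiv; rewrite Rmult_1_l; lra).
  ring.
Qed.

Lemma csum_ext f g n : (forall i, (i < n)%nat -> f i = g i) -> csum f n = csum g n.
Proof. induction n; simpl; intros; auto. rewrite IHn, H; auto. Qed.
Lemma csum_plus f g n : csum (fun i => Cplus (f i) (g i)) n = Cplus (csum f n) (csum g n).
Proof. induction n; simpl. unfold RtoC, Cplus; simpl; f_equal; ring. rewrite IHn; ring. Qed.
Lemma csum_scal c f n : csum (fun i => Cmult c (f i)) n = Cmult c (csum f n).
Proof. induction n; simpl. unfold RtoC, Cmult; simpl; f_equal; ring. rewrite IHn; ring. Qed.
Lemma csum_scal_r c f n : csum (fun i => Cmult (f i) c) n = Cmult (csum f n) c.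
Proof. induction n; simpl. unfold RtoC, Cmult; simpl; f_equal; ring. rewrite IHn; ring. Qed.
Lemma csum_zero n : csum (fun _ => RtoC 0) n = RtoC 0.
Proof. induction n; simpl; auto. rewrite IHn. unfold RtoC, Cplus; simpl; f_equal; ring. Qed.
Lemma csum_mult f g n m : Cmult (csum f n) (csum g m) = csum (fun p => csum (fun q => Cmult (f p) (g q)) m) n.
Proof. induction n. simpl. unfold RtoC, Cmult; destruct (csum g m); simpl; f_equal; ring.
  cbn [csum]. rewrite <- IHn, csum_scal. ring. Qed.
Lemma csum_swap (f : nat -> nat -> C) n m :
  csum (fun i => csum (fun j => f i j) m) n = csum (fun j => csum (fun i => f i j) n) m.
Proof. induction n; simpl. rewrite csum_zero. reflexivity.
  rewrite IHn, <- csum_plus. reflexivity. Qed.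
Lemma csum_delta (f : nat -> C) p n : (p < n)%nat ->
  csum (fun q => if Nat.eqb q p then f q else RtoC 0) n = f p.
Proof. induction n; intros H. lia. simpl. destruct (Nat.eq_dec p n).
  - subst. rewrite Nat.eqb_refl. rewrite (csum_ext _ (fun _ => RtoC 0)). rewrite csum_zero.
    unfold RtoC, Cplus; simpl. destruct (f n); simpl; f_equal; ring.
    intros i Hi. destruct (Nat.eqb_spec i n). lia. auto.
  - rewrite IHn by lia. destruct (Nat.eqb_spec n p). lia. unfold RtoC, Cplus; destruct (f p); simpl; f_equal; ring.
Qed.

Definition cis (t : R) : C := (cos t, sin t).
Lemma cis_mult a b : Cmult (cis a) (cis b) = cis (a + b).
Proof. unfold cis, Cmult; simpl. rewrite cos_plus, sin_plus. f_equal; ring. Qed.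
Lemma cis_pow t n : Cpow (cis t) n = cis (INR n * t).
Proof. induction n. simpl. unfold cis. rewrite Rmult_0_l, cos_0, sin_0. reflexivity.
  simpl Cpow. rewrite IHn, cis_mult. f_equal. rewrite S_INR; ring. Qed.

Lemma sum_trig_zero (phi : R) (m N : nat) : sin (phi / 2) <> 0 -> INR N * phi = 2 * INR m * PI ->
  rsum (fun j => cos (INR j * phi)) N = 0 /\ rsum (fun j => sin (INR j * phi)) N = 0.
Proof.
  intros Hs HN.
  assert (Hc : forall n, 2 * sin (phi/2) * rsum (fun j => cos (INR j * phi)) n = sin ((INR n - /2) * phi) + sin (phi/2)).
  { induction n. simpl. replace ((0 - /2) * phi) with (- (phi/2)) by field. rewrite sin_neg. ring.
    simpl rsum. rewrite Rmult_plus_distr_l, IHn. rewrite S_INR.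
    replace ((INR n + 1 - /2) * phi) with (INR n * phi + phi/2) by field.
    replace ((INR n - /2) * phi) with (INR n * phi - phi/2) by field.
    rewrite sin_plus, sin_minus. ring. }
  assert (Hsn : forall n, 2 * sin (phi/2) * rsum (fun j => sin (INR j * phi)) n = cos (phi/2) - cos ((INR n - /2) * phi)).
  { induction n. simpl. replace ((0 - /2) * phi) with (- (phi/2)) by field. rewrite cos_neg. ring.
    simpl rsum. rewrite Rmult_plus_distr_l, IHn. rewrite S_INR.
    replace ((INR n + 1 - /2) * phi) with (INR n * phi + phi/2) by field.
    replace ((INR n - /2) * phi) with (INR n * phi - phi/2) by field.
    rewrite cos_plus, cos_minus. ring. }
  assert (E : (INR N - /2) * phi = - (phi/2) + 2 * INR m * PI) by (rewrite <- HN; field).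
  specialize (Hc N). specialize (Hsn N). rewrite E, sin_period, sin_neg in Hc. rewrite E, cos_period, cos_neg in Hsn.
  split.
  - apply Rmult_eq_reg_l with (2 * sin (phi/2)). rewrite Hc; ring. intro; apply Hs; lra.
  - apply Rmult_eq_reg_l with (2 * sin (phi/2)). rewrite Hsn; ring. intro; apply Hs; lra.
Qed.

Definition theta (N j : nat) : R := 2 * PI * INR j / INR N.

Lemma sum_cis (N p q : nat) : (p < N)%nat -> (q < N)%nat ->
  csum (fun j => cis ((INR p - INR q) * theta N j)) N = if Nat.eqb p q then RtoC (INR N) else RtoC 0.
Proof.
  intros Hp Hq. assert (HN : 0 < INR N) by (apply lt_0_INR; lia).
  destruct (Nat.eqb_spec p q).
  - subst. rewrite (csum_ext _ (fun _ => RtoC 1)). 2:{ intros. unfold cis. rewrite Rminus_diag, Rmult_0_l, cos_0, sin_0. reflexivity. }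
    clear. induction N. reflexivity. cbn [csum]. rewrite IHN, S_INR. unfold RtoC, Cplus; simpl; f_equal; ring.
  - assert (Key : forall m, (0 < m < N)%nat -> rsum (fun j => cos (INR j * (2 * PI * INR m / INR N))) N = 0 /\
                   rsum (fun j => sin (INR j * (2 * PI * INR m / INR N))) N = 0).
    { intros m Hm. apply sum_trig_zero with m.
      - apply Rgt_not_eq. apply sin_gt_0.
        + assert (0 < INR m) by (apply lt_0_INR; lia). assert (0 < PI) by apply PI_RGT_0.
          apply Rmult_lt_0_compat. apply Rdiv_lt_0_compat; [|lra]. nra. lra.
        + assert (INR m < INR N) by (apply lt_INR; lia). assert (0 < PI) by apply PI_RGT_0.
          replace (2 * PI * INR m / INR N / 2) with (PI * (INR m / INR N)) by (field; lra).
          rewrite <- (Rmult_1_r PI) at 2. apply Rmult_lt_compat_l; auto.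
          apply Rmult_lt_reg_r with (INR N); auto. unfold Rdiv; rewrite Rmult_assoc, Rinv_l; lra.
      - field; lra. }
    unfold RtoC. apply injective_projections.
    + rewrite fst_csum. simpl.
      destruct (Nat.lt_ge_cases q p).
      * destruct (Key (p - q)%nat ltac:(lia)) as [K1 _]. rewrite <- K1. apply rsum_ext; intros.
        unfold theta. f_equal. rewrite minus_INR by lia. field; lra.
      * destruct (Key (q - p)%nat ltac:(lia)) as [K1 _]. rewrite <- K1. apply rsum_ext; intros.
        unfold theta. rewrite <- cos_neg. f_equal. rewrite minus_INR by lia. field; lra.
    + rewrite snd_csum. simpl.
      destruct (Nat.lt_ge_cases q p).
      * destruct (Key (p - q)%nat ltac:(lia)) as [_ K1]. rewrite <- K1. apply rsum_ext; intros.
        unfold theta. f_equal. rewrite minus_INR by lia. field; lra.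
      * destruct (Key (q - p)%nat ltac:(lia)) as [_ K1].
        rewrite (rsum_ext _ (fun j => -1 * sin (INR j * (2 * PI * INR (q - p) / INR N)))).
        rewrite rsum_scal, K1; ring.
        intros i Hi. unfold theta. rewrite minus_INR by lia.
        replace ((INR p - INR q) * (2 * PI * INR i / INR N)) with
          (- (INR i * (2 * PI * (INR q - INR p) / INR N))) by (field; lra). rewrite sin_neg. ring.
Qed.

Definition ifact (p : nat) : R := / INR (Factorial.fact p).

Lemma avg_id (A B : C) N : (0 < N)%nat ->
  csum (fun j => Cmult (T N (Cmult A (cis (theta N j)))) (T N (Cmult B (cis (- theta N j))))) N
  = Cmult (RtoC (INR N)) (csum (fun p => Cmult (RtoC (ifact p * ifact p)) (Cpow (Cmult A B) p)) N).
Proof.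
  intros HN.
  set (a := fun p => Cmult (RtoC (ifact p)) (Cpow A p)).
  set (b := fun q => Cmult (RtoC (ifact q)) (Cpow B q)).
  rewrite (csum_ext _ (fun j => csum (fun p => csum (fun q =>
       Cmult (Cmult (a p) (b q)) (cis ((INR p - INR q) * theta N j))) N) N)).
  2:{ intros j Hj. unfold T. rewrite csum_mult. apply csum_ext; intros p Hp. apply csum_ext; intros q Hq.
      rewrite !Cpow_mult_l, !cis_pow. unfold a, b, ifact.
      replace (cis ((INR p - INR q) * theta N j)) with (Cmult (cis (INR p * theta N j)) (cis (INR q * - theta N j))).
      ring. rewrite cis_mult. f_equal; ring. }
  rewrite csum_swap.
  rewrite (csum_ext _ (fun p => csum (fun q => Cmult (Cmult (a p) (b q))
       (if Nat.eqb p q then RtoC (INR N) else RtoC 0)) N)).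
  2:{ intros p Hp. rewrite csum_swap. apply csum_ext; intros q Hq.
      rewrite csum_scal. rewrite sum_cis; auto. }
  rewrite <- csum_scal. apply csum_ext; intros p Hp.
  rewrite (csum_ext _ (fun q => if Nat.eqb q p then Cmult (Cmult (a p) (b q)) (RtoC (INR N)) else RtoC 0)).
  2:{ intros q Hq. rewrite Nat.eqb_sym. destruct (Nat.eqb_spec q p). subst; auto.
      unfold RtoC, Cmult; simpl; f_equal; ring. }
  rewrite (csum_delta (fun q => Cmult (Cmult (a p) (b q)) (RtoC (INR N)))); auto.
  unfold a, b. rewrite Cpow_mult_l. unfold RtoC, Cmult; simpl. f_equal; ring.
Qed.

Lemma rsum_sum_f f n : rsum f (S n) = sum_f_R0 f n.
Proof. induction n. simpl; ring. cbn [rsum] in *. rewrite IHn. simpl. ring. Qed.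

Lemma taylor_le_exp x N : 0 <= x -> rsum (fun n => x ^ n * ifact n) N <= exp x.
Proof. intros Hx. destruct N. simpl. left; apply exp_pos.
  rewrite rsum_sum_f. eapply Rle_trans; [|apply (exp_ge_taylor x N Hx)]. right.
  apply sum_eq. intros; unfold ifact, Rdiv; ring. Qed.

Lemma fst_le_Cmod z : fst z <= Cmod z.
Proof. unfold Cmod. destruct z as [x y]; cbn [fst snd].
  apply Rle_trans with (Rabs x). apply Rle_abs. rewrite <- sqrt_Rsqr_abs. apply sqrt_le_1_alt.
  unfold Rsqr; nra. Qed.

Lemma Cmod_cexp_le z : Cmod (cexp z) <= exp (Cmod z).
Proof. rewrite Cmod_cexp. destruct (Rle_lt_or_eq_dec _ _ (fst_le_Cmod z)).
  left; apply exp_increasing; auto. rewrite e; lra. Qed.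

Lemma Cmod_RtoC x : Cmod (RtoC x) = Rabs x.
Proof. apply Cmod_R. Qed.

Lemma ifact_pos n : 0 < ifact n.
Proof. unfold ifact. apply Rinv_0_lt_compat, lt_0_INR, Factorial.lt_O_fact. Qed.

Lemma Cmod_T_le z N : Cmod (T N z) <= exp (Cmod z).
Proof. unfold T. eapply Rle_trans. apply Cmod_csum.
  eapply Rle_trans; [|apply (taylor_le_exp (Cmod z) N (Cmod_ge_0 z))]. right.
  apply rsum_ext; intros. rewrite Cmod_mult, Cmod_RtoC, Cmod_pow. rewrite Rabs_pos_eq. unfold ifact; ring.
  left; apply ifact_pos. Qed.

Lemma Cmod_cis t : Cmod (cis t) = 1.
Proof. unfold Cmod, cis; cbn [fst snd]. rewrite <- !Rsqr_pow2, Rplus_comm, sin2_cos2. apply sqrt_1. Qed.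

Lemma rsum_sq_le (x : nat -> R) N : (forall i, 0 <= x i) -> rsum (fun i => x i * x i) N <= rsum x N * rsum x N.
Proof. intros H. induction N. simpl; lra. cbn [rsum].
  assert (0 <= rsum x N) by (apply rsum_nonneg; auto). specialize (H N). nra. Qed.

Lemma main_le (A B : C) N : Cmod (csum (fun p => Cmult (RtoC (ifact p * ifact p)) (Cpow (Cmult A B) p)) N)
   <= exp (2 * sqrt (Cmod A * Cmod B)).
Proof.
  set (c := sqrt (Cmod A * Cmod B)).
  assert (Hc0 : 0 <= c) by apply sqrt_pos.
  assert (Hcc : c * c = Cmod A * Cmod B) by (apply sqrt_sqrt; apply Rmult_le_pos; apply Cmod_ge_0).
  eapply Rle_trans. apply Cmod_csum.
  eapply Rle_trans with (rsum (fun p => (c ^ p * ifact p) * (c ^ p * ifact p)) N).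
  - right. apply rsum_ext; intros. rewrite Cmod_mult, Cmod_RtoC, Cmod_pow, Cmod_mult, <- Hcc.
    rewrite Rabs_pos_eq. rewrite Rpow_mult_distr. ring.
    assert (H0 := ifact_pos i). left; apply Rmult_lt_0_compat; auto.
  - eapply Rle_trans. apply (rsum_sq_le (fun p => c ^ p * ifact p)). intros; apply Rmult_le_pos.
    apply pow_le; auto. left; apply ifact_pos.
    replace (2 * c) with (c + c) by ring. rewrite exp_plus.
    assert (H1 := taylor_le_exp c N Hc0). assert (0 <= rsum (fun p => c ^ p * ifact p) N).
    apply rsum_nonneg; intros; apply Rmult_le_pos. apply pow_le; auto. left; apply ifact_pos.
    apply Rmult_le_compat; auto.
Qed.

Lemma err_le (A B : C) t N M : Cmod A <= M -> Cmod B <= M ->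
  Cmod (Cminus (Cmult (cexp (Cmult A (cis t))) (cexp (Cmult B (cis (- t)))))
               (Cmult (T N (Cmult A (cis t))) (T N (Cmult B (cis (- t))))))
  <= 2 * (M ^ N * ifact N * exp M) * exp M.
Proof.
  intros HA HB.
  set (a := Cmult A (cis t)). set (b := Cmult B (cis (- t))).
  assert (Ha : Cmod a <= M) by (unfold a; rewrite Cmod_mult, Cmod_cis; lra).
  assert (Hb : Cmod b <= M) by (unfold b; rewrite Cmod_mult, Cmod_cis; lra).
  replace (Cminus (Cmult (cexp a) (cexp b)) (Cmult (T N a) (T N b))) with
    (Cplus (Cmult (Cminus (cexp a) (T N a)) (cexp b)) (Cmult (T N a) (Cminus (cexp b) (T N b)))) by ring.
  eapply Rle_trans. apply Cmod_triangle. rewrite !Cmod_mult.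
  assert (R : forall z, Cmod z <= M -> Cmod (Cminus (cexp z) (T N z)) <= M ^ N * ifact N * exp M).
  { intros z Hz. eapply Rle_trans. apply taylor_bound. unfold ifact, Rdiv.
    assert (0 <= Cmod z) by apply Cmod_ge_0.
    apply Rmult_le_compat. apply Rmult_le_pos. apply pow_le; auto. left; apply Rinv_0_lt_compat, lt_0_INR, Factorial.lt_O_fact.
    left; apply exp_pos. apply Rmult_le_compat_r. left; apply Rinv_0_lt_compat, lt_0_INR, Factorial.lt_O_fact.
    apply pow_incr; auto. destruct (Rle_lt_or_eq_dec _ _ Hz). left; apply exp_increasing; auto. rewrite e; lra. }
  assert (E : forall z, Cmod z <= M -> exp (Cmod z) <= exp M).
  { intros z Hz. destruct (Rle_lt_or_eq_dec _ _ Hz). left; apply exp_increasing; auto. rewrite e; lra. }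
  assert (R1 := R a Ha). assert (R2 := R b Hb).
  assert (C1 := Rle_trans _ _ _ (Cmod_cexp_le b) (E b Hb)).
  assert (C2 := Rle_trans _ _ _ (Cmod_T_le a N) (E a Ha)).
  assert (0 <= Cmod (Cminus (cexp a) (T N a))) by apply Cmod_ge_0.
  assert (0 <= Cmod (Cminus (cexp b) (T N b))) by apply Cmod_ge_0.
  assert (0 <= Cmod (cexp b)) by apply Cmod_ge_0.
  assert (0 <= Cmod (T N a)) by apply Cmod_ge_0.
  assert (0 <= exp M) by (left; apply exp_pos).
  assert (Cmod (Cminus (cexp a) (T N a)) * Cmod (cexp b) <= (M ^ N * ifact N * exp M) * exp M) by (apply Rmult_le_compat; auto).
  assert (Cmod (T N a) * Cmod (Cminus (cexp b) (T N b)) <= exp M * (M ^ N * ifact N * exp M)) by (apply Rmult_le_compat; auto).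
  lra.
Qed.

Lemma avg_bound (A B : C) N M : (0 < N)%nat -> Cmod A <= M -> Cmod B <= M ->
  Cmod (csum (fun j => Cmult (cexp (Cmult A (cis (theta N j)))) (cexp (Cmult B (cis (- theta N j))))) N)
  <= INR N * (exp (2 * sqrt (Cmod A * Cmod B)) + 2 * (M ^ N * ifact N * exp M) * exp M).
Proof.
  intros HN HA HB.
  set (E := fun j => Cmult (cexp (Cmult A (cis (theta N j)))) (cexp (Cmult B (cis (- theta N j))))).
  set (F := fun j => Cmult (T N (Cmult A (cis (theta N j)))) (T N (Cmult B (cis (- theta N j))))).
  replace (csum E N) with (Cplus (csum F N) (csum (fun j => Cminus (E j) (F j)) N)).
  2:{ unfold Cminus. rewrite csum_plus. rewrite (csum_ext (fun j => Copp (F j)) (fun j => Cmult (RtoC (-1)) (F j))).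
      rewrite csum_scal. replace (RtoC (-1)) with (Copp (RtoC 1)) by (unfold RtoC, Copp; simpl; f_equal; ring). ring.
      intros; unfold RtoC, Copp, Cmult; destruct (F i); simpl; f_equal; ring. }
  eapply Rle_trans. apply Cmod_triangle. unfold F. rewrite avg_id; auto.
  rewrite Cmod_mult, Cmod_RtoC, Rabs_pos_eq by apply pos_INR.
  rewrite Rmult_plus_distr_l. apply Rplus_le_compat.
  apply Rmult_le_compat_l. apply pos_INR. apply main_le.
  eapply Rle_trans. apply Cmod_csum.
  replace (INR N * (2 * (M ^ N * ifact N * exp M) * exp M)) with (rsum (fun _ => 2 * (M ^ N * ifact N * exp M) * exp M) N).
  apply rsum_le. intros; apply err_le; auto.
  generalize (2 * (M ^ N * ifact N * exp M) * exp M). clear. intro K. induction N. simpl; ring. cbn [rsum]. rewrite IHN, S_INR. ring.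
Qed.

Lemma poly_ineq x y r b : 0 < r -> x^2 + y^2 <= r^2 -> b^2 = 9 * r^2 ->
  (y^2 + (x - 2*r - b)^2) * (y^2 + (x - 2*r + b)^2) <= 70 * r^4.
Proof.
  intros Hr Hd Hb.
  assert (E : (y^2 + (x - 2*r - b)^2) * (y^2 + (x - 2*r + b)^2) = ((x-2*r)^2 + y^2 + b^2)^2 - 4*(x-2*r)^2*b^2) by ring.
  rewrite E, Hb. clear E Hb.
  assert (Hx : x <= r) by nra. assert (Hx' : -r <= x) by nra.
  set (s := x^2 + y^2).
  replace (y^2) with (s - x^2) by (unfold s; ring).
  assert (Hrx : r*x <= r*r) by (apply Rmult_le_compat_l; lra).
  assert (Hs0 : 0 <= s) by (unfold s; nra).
  assert (Hsr : s <= r^2) by (unfold s; lra).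
  assert (0 <= (r^2 - s) * (27*r^2 + s - 8*r*x)) by (apply Rmult_le_pos; nra).
  assert (0 <= r^2 * (x - 4/5*r)^2) by (apply Rmult_le_pos; apply pow2_ge_0).
  assert (0 <= r^4) by (apply pow_le; lra).
  assert (Id : ((x - 2 * r) ^ 2 + (s - x ^ 2) + 9 * r ^ 2) ^ 2 - 4 * (x - 2 * r) ^ 2 * (9 * r ^ 2)
     = 81 * r^4 - (r^2 - s) * (27*r^2 + s - 8*r*x) - 20 * (r^2 * (x - 4/5*r)^2) - 81/5 * r^4) by field.
  rewrite Id. lra.
Qed.

Lemma exp_INR_mult n t : exp (INR n * t) = exp t ^ n.
Proof. induction n. simpl. rewrite Rmult_0_l; apply exp_0.
  rewrite S_INR, Rmult_plus_distr_r, Rmult_1_l, exp_plus, IHn. simpl; ring. Qed.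

Lemma sqrt_le_bound u v : 0 <= v -> u <= v ^ 2 -> sqrt u <= v.
Proof. intros Hv Hu. destruct (Rle_or_lt 0 u).
  rewrite <- (sqrt_pow2 v Hv). apply sqrt_le_1_alt; auto.
  rewrite sqrt_neg_0 by lra. auto. Qed.

Lemma err_small M0 N : 0 <= M0 -> (0 < N)%nat -> 80 * M0 <= 7 * INR N ->
  2 * (M0 ^ N * ifact N * exp M0) * exp M0 <= 2.
Proof.
  intros HM HN Hr. assert (HNp : 0 < INR N) by (apply lt_0_INR; lia).
  assert (H1 : INR N ^ N * ifact N <= exp (INR N)).
  { eapply Rle_trans; [|apply (taylor_le_exp (INR N) (S N)); lra].
    apply (rsum_ge_term (fun n => INR N ^ n * ifact n) (S N) N).
    intros; apply Rmult_le_pos. apply pow_le; lra. left; apply ifact_pos. lia. }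
  set (q := M0 / INR N).
  assert (Hq0 : 0 <= q) by (unfold q; apply Rmult_le_pos; [lra| left; apply Rinv_0_lt_compat; lra]).
  assert (Hq : q <= 7/80) by (unfold q; apply Rmult_le_reg_r with (INR N); auto; unfold Rdiv; rewrite Rmult_assoc, Rinv_l; lra).
  assert (HMq : M0 = INR N * q) by (unfold q; field; lra).
  assert (He : exp 1 <= 3) by apply exp_le_3.
  assert (He2 : exp (2 * q) <= exp 1).
  { destruct (Rle_lt_or_eq_dec (2*q) 1 ltac:(lra)). left; apply exp_increasing; auto. rewrite e; lra. }
  assert (Hpos : 0 < exp (2*q)) by apply exp_pos.
  assert (Key : M0 ^ N * ifact N * exp M0 * exp M0 <= (q * exp 1 * exp (2 * q)) ^ N).
  { assert (0 <= q ^ N) by (apply pow_le; lra).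
    assert (0 < exp (INR N * (2 * q))) by apply exp_pos.
    replace (M0 ^ N * ifact N * exp M0 * exp M0) with ((q ^ N * exp (INR N * (2 * q))) * (INR N ^ N * ifact N)).
    2:{ rewrite HMq, Rpow_mult_distr. replace (INR N * (2 * q)) with (INR N * q + INR N * q) by ring.
        rewrite exp_plus; ring. }
    replace ((q * exp 1 * exp (2 * q)) ^ N) with ((q ^ N * exp (INR N * (2 * q))) * exp (INR N)).
    2:{ rewrite !Rpow_mult_distr, <- !exp_INR_mult, Rmult_1_r; ring. }
    apply Rmult_le_compat_l. apply Rmult_le_pos; lra. auto. }
  assert (Hb : q * exp 1 * exp (2 * q) <= 1).
  { assert (0 <= exp 1) by (left; apply exp_pos).
    assert (q * exp 1 <= 7/80 * 3) by (apply Rmult_le_compat; lra).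
    assert (q * exp 1 * exp (2*q) <= 7/80 * 3 * 3) by (apply Rmult_le_compat; try lra; apply Rmult_le_pos; lra).
    lra. }
  assert ((q * exp 1 * exp (2 * q)) ^ N <= 1 ^ N).
  { apply pow_incr. split; auto. apply Rmult_le_pos; [apply Rmult_le_pos|]; try lra. }
  rewrite pow1 in H. lra.
Qed.

Lemma E_fst (k beta X y t : R) :
  fst (Cmult (cexp (Cmult (k/2*y, k/2*(X - beta)) (cis t))) (cexp (Cmult (-(k/2)*y, k/2*(X + beta)) (cis (- t)))))
  = exp (k * beta * sin t) * cos (k * (X * cos t + y * sin t)).
Proof.
  rewrite <- cexp_add. unfold cexp, Cplus, Cmult, cis. cbn [fst snd]. rewrite cos_neg, sin_neg.
  f_equal; f_equal; field.
Qed.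

Lemma Rabs_fst_le z : Rabs (fst z) <= Cmod z.
Proof. unfold Cmod. destruct z as [x y]; cbn [fst snd].
  rewrite <- sqrt_Rsqr_abs. apply sqrt_le_1_alt. unfold Rsqr; nra. Qed.

Lemma V_bound k r N x y beta : 0 < k -> 0 < r -> (0 < N)%nat -> x ^ 2 + y ^ 2 <= r ^ 2 -> beta ^ 2 = 9 * r ^ 2 ->
  40 * k * r <= INR N ->
  Rabs (rsum (fun j => exp (k * beta * sin (theta N j)) * cos (k * ((x - 2 * r) * cos (theta N j) + y * sin (theta N j)))) N)
  <= INR N * (exp (29/10 * k * r) + 2).
Proof.
  intros Hk Hr HN Hd Hb HNk.
  set (X := x - 2 * r).
  set (A := (k/2*y, k/2*(X - beta))). set (B := (-(k/2)*y, k/2*(X + beta))).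
  rewrite (rsum_ext _ (fun j => fst (Cmult (cexp (Cmult A (cis (theta N j)))) (cexp (Cmult B (cis (- theta N j))))))).
  2:{ intros; unfold A, B; rewrite E_fst; reflexivity. }
  rewrite <- fst_csum. eapply Rle_trans. apply Rabs_fst_le.
  assert (Hb1 : beta <= 3 * r) by nra.
  assert (Hb2 : -3 * r <= beta) by nra.
  assert (Hx1 : x <= r) by nra. assert (Hx2 : -r <= x) by nra.
  assert (Hy2 : y ^ 2 <= r ^ 2) by nra.
  set (M0 := 7 * k * r / 2).
  assert (HA : Cmod A <= M0).
  { unfold Cmod, A, M0; cbn [fst snd]. apply sqrt_le_bound. nra.
    assert ((X - beta) ^ 2 <= 36 * r ^ 2) by (unfold X; nra).
    replace ((k / 2 * y) ^ 2 + (k / 2 * (X - beta)) ^ 2) with (k^2/4 * (y ^ 2 + (X - beta) ^ 2)) by field.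
    replace ((7 * k * r / 2) ^ 2) with (k^2/4 * (49 * r^2)) by field.
    apply Rmult_le_compat_l. nra. nra. }
  assert (HB : Cmod B <= M0).
  { unfold Cmod, B, M0; cbn [fst snd]. apply sqrt_le_bound. nra.
    assert ((X + beta) ^ 2 <= 36 * r ^ 2) by (unfold X; nra).
    replace ((- (k / 2) * y) ^ 2 + (k / 2 * (X + beta)) ^ 2) with (k^2/4 * (y ^ 2 + (X + beta) ^ 2)) by field.
    replace ((7 * k * r / 2) ^ 2) with (k^2/4 * (49 * r^2)) by field.
    apply Rmult_le_compat_l. nra. nra. }
  eapply Rle_trans. apply (avg_bound A B N M0 HN HA HB).
  apply Rmult_le_compat_l. apply pos_INR.
  apply Rplus_le_compat.
  - assert (Hs : sqrt (Cmod A * Cmod B) <= 29/20 * k * r).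
    { apply sqrt_le_bound. nra.
      unfold Cmod. rewrite <- sqrt_mult by (apply Rplus_le_le_0_compat; apply pow2_ge_0).
      apply sqrt_le_bound. nra.
      unfold A, B; cbn [fst snd].
      assert (P := poly_ineq x y r beta Hr Hd Hb).
      replace ((k / 2 * y) ^ 2 + (k / 2 * (X - beta)) ^ 2) with (k^2/4 * (y ^ 2 + (x - 2 * r - beta) ^ 2)) by (unfold X; field).
      replace ((- (k / 2) * y) ^ 2 + (k / 2 * (X + beta)) ^ 2) with (k^2/4 * (y ^ 2 + (x - 2 * r + beta) ^ 2)) by (unfold X; field).
      assert (0 < k ^ 4) by (apply pow_lt; lra).
      replace (k ^ 2 / 4 * (y ^ 2 + (x - 2 * r - beta) ^ 2) * (k ^ 2 / 4 * (y ^ 2 + (x - 2 * r + beta) ^ 2)))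
        with (k^4/16 * ((y ^ 2 + (x - 2 * r - beta) ^ 2) * (y ^ 2 + (x - 2 * r + beta) ^ 2))) by field.
      assert (k ^ 4 / 16 * ((y ^ 2 + (x - 2 * r - beta) ^ 2) * (y ^ 2 + (x - 2 * r + beta) ^ 2)) <= k^4/16 * (70 * r ^ 4)).
      { apply Rmult_le_compat_l; lra. }
      eapply Rle_trans. apply H0.
      assert (0 < k ^ 4 * r ^ 4) by (apply Rmult_lt_0_compat; apply pow_lt; lra).
      replace (((29/20 * k * r) ^ 2) ^ 2) with (k ^ 4 * r ^ 4 * (29/20)^4) by field.
      replace (k ^ 4 / 16 * (70 * r ^ 4)) with (k ^ 4 * r ^ 4 * (70/16)) by field.
      apply Rmult_le_compat_l; lra. }
    destruct (Rle_lt_or_eq_dec (2 * sqrt (Cmod A * Cmod B)) (29/10*k*r)) as [L|E]. lra.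
    left; apply exp_increasing; auto. rewrite E; lra.
  - apply err_small. unfold M0; nra. auto. unfold M0; lra.
Qed.

Lemma nat_near (x : R) : 0 <= x -> exists n : nat, x <= INR n <= x + 1.
Proof.
  intros Hx. destruct (archimed x) as [H1 H2].
  assert (Hz : (0 <= up x)%Z). { apply le_IZR. simpl. lra. }
  exists (Z.to_nat (up x)). rewrite INR_IZR_INZ, Z2Nat.id by auto. lra.
Qed.

Lemma exp_le_mono a b : a <= b -> exp a <= exp b.
Proof. intros H. destruct (Rle_lt_or_eq_dec _ _ H). left; apply exp_increasing; auto. rewrite e; lra. Qed.

Lemma ln_le_mono a b : 0 < a -> a <= b -> ln a <= ln b.
Proof. intros Ha H. destruct (Rle_lt_or_eq_dec _ _ H). left; apply ln_increasing; auto. rewrite e; lra. Qed.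

Section Construction.
Variables k r : R.
Hypothesis Hk : 0 < k.
Hypothesis Hr : 0 < r.
Variable Mn : nat.
Hypothesis HM : 10 * k * r <= INR Mn <= 10 * k * r + 1.
Let N := (4 * Mn)%nat.

Definition cc (j : nat) := cosh (k * (3 * r) * sin (theta N j)) / INR N.
Definition uu := TS N cc (fun j => k * cos (theta N j)) (fun j => k * sin (theta N j)) (fun j => - (2 * r) * k * cos (theta N j)).

Lemma Mn_pos : (0 < Mn)%nat.
Proof. destruct Mn. simpl in HM. nra. lia. Qed.
Lemma N_pos : 0 < INR N.
Proof. apply lt_0_INR. unfold N. assert (H := Mn_pos). lia. Qed.
Lemma N_bound : 40 * k * r <= INR N <= 40 * k * r + 4.
Proof. unfold N. rewrite mult_INR. simpl INR. lra. Qed.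

Lemma cc_pos j : 0 < cc j.
Proof. unfold cc, cosh. assert (H := N_pos). apply Rdiv_lt_0_compat; auto.
  assert (0 < exp (k * (3 * r) * sin (theta N j))) by apply exp_pos.
  assert (0 < exp (- (k * (3 * r) * sin (theta N j)))) by apply exp_pos. lra. Qed.

Definition Ssum := rsum cc N.

Lemma uu_helm : helmholtz_sol k uu.
Proof. apply helm_TS. intros. rewrite !Rpow_mult_distr, <- Rmult_plus_distr_l.
  rewrite <- !Rsqr_pow2, Rplus_comm, sin2_cos2. ring. Qed.

Lemma uu_global x y : Rabs (uu x y) <= Ssum.
Proof. unfold uu, TS, Ssum. eapply Rle_trans. apply rsum_abs. apply rsum_le. intros.
  rewrite Rabs_mult, Rabs_pos_eq by (left; apply cc_pos).
  assert (Rabs (cos (k * cos (theta N i) * x + k * sin (theta N i) * y + - (2 * r) * k * cos (theta N i))) <= 1) by apply Rabs_le, COS_bound.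
  assert (H1 := cc_pos i). nra. Qed.

Lemma uu_center : uu (2 * r) 0 = Ssum.
Proof. unfold uu, TS, Ssum. apply rsum_ext. intros.
  replace (k * cos (theta N i) * (2 * r) + k * sin (theta N i) * 0 + - (2 * r) * k * cos (theta N i)) with 0 by ring.
  rewrite cos_0; ring. Qed.

Lemma S_lower : exp (3 * k * r) / (2 * INR N) <= Ssum.
Proof.
  assert (HN := N_pos).
  eapply Rle_trans; [| apply (rsum_ge_term cc N Mn); [intros; left; apply cc_pos | unfold N; assert (H := Mn_pos); lia]].
  unfold cc. replace (theta N Mn) with (PI / 2).
  2:{ unfold theta, N. rewrite mult_INR. simpl INR. assert (0 < INR Mn) by (apply lt_0_INR, Mn_pos). field. lra. }
  rewrite sin_PI2, Rmult_1_r. unfold cosh.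
  assert (0 < exp (- (k * (3 * r)))) by apply exp_pos.
  replace (k * (3 * r)) with (3 * k * r) by ring.
  replace ((exp (3 * k * r) + exp (- (3 * k * r))) / 2 / INR N) with
    (exp (3 * k * r) / (2 * INR N) + exp (- (3 * k * r)) / (2 * INR N)) by (field; lra).
  assert (0 <= exp (- (3 * k * r)) / (2 * INR N)) by (left; apply Rdiv_lt_0_compat; [apply exp_pos| lra]).
  lra.
Qed.

Lemma uu_small x y : x ^ 2 + y ^ 2 <= r ^ 2 -> Rabs (uu x y) <= exp (29/10 * k * r) + 2.
Proof.
  intros Hd. assert (HN := N_pos). assert (HNb := N_bound).
  assert (HN0 : (0 < N)%nat) by (unfold N; assert (H := Mn_pos); lia).
  set (V := fun beta => rsum (fun j => exp (k * beta * sin (theta N j)) * cos (k * ((x - 2 * r) * cos (theta N j) + y * sin (theta N j)))) N).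
  assert (E : uu x y = / (2 * INR N) * (V (3 * r) + V (- (3 * r)))).
  { unfold uu, TS, V. rewrite <- rsum_plus, <- rsum_scal. apply rsum_ext. intros j _.
    unfold cc, cosh.
    replace (k * cos (theta N j) * x + k * sin (theta N j) * y + - (2 * r) * k * cos (theta N j)) with
      (k * ((x - 2 * r) * cos (theta N j) + y * sin (theta N j))) by ring.
    replace (k * - (3 * r) * sin (theta N j)) with (- (k * (3 * r) * sin (theta N j))) by ring.
    field. lra. }
  assert (B1 := V_bound k r N x y (3 * r) Hk Hr HN0 Hd ltac:(ring) ltac:(lra)).
  assert (B2 := V_bound k r N x y (- (3 * r)) Hk Hr HN0 Hd ltac:(ring) ltac:(lra)).
  fold (V (3 * r)) in B1. fold (V (- (3 * r))) in B2.
  rewrite E, Rabs_mult, Rabs_pos_eq by (left; apply Rinv_0_lt_compat; lra).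
  assert (Rabs (V (3 * r) + V (- (3 * r))) <= 2 * INR N * (exp (29 / 10 * k * r) + 2)).
  { eapply Rle_trans. apply Rabs_triang. lra. }
  apply Rmult_le_reg_l with (2 * INR N). lra.
  rewrite <- Rmult_assoc, Rinv_r, Rmult_1_l by lra. lra.
Qed.

End Construction.

Theorem mainTheorem2 :
  exists c d : R, 0 < c /\ 0 < d /\
    forall alpha k r C : R,
      0 < alpha < 1 -> 0 < k -> 0 < r ->
      (forall u : R -> R -> R, helmholtz_sol k u ->
         Mu u (2 * r) <= C * rpow (Mu u r) alpha * rpow (Mu u (4 * r)) (1 - alpha)) ->
      c * exp (d * alpha * k * r) <= C.
Proof.
  exists (1/4800), (1/20). split; [lra|]. split; [lra|].
  intros alpha k r C Ha Hk Hr Hyp.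
  destruct (nat_near (10 * k * r)) as [Mn HM]. nra.
  set (u := uu k r Mn).
  assert (Hh : helmholtz_sol k u) by (apply uu_helm; auto).
  specialize (Hyp u Hh).
  set (S0 := Ssum k r Mn).
  assert (HNb := N_bound k r Mn HM).
  set (NN := INR (4 * Mn)) in *.
  assert (HSl : exp (3 * k * r) / (2 * NN) <= S0) by (apply S_lower; auto).
  assert (Hkr : 0 < k * r) by nra.
  assert (HNp : 0 < NN) by lra.
  assert (HS0 : 0 < S0). { eapply Rlt_le_trans; [|apply HSl]. apply Rdiv_lt_0_compat. apply exp_pos. lra. }
  assert (Hglob : forall x y, Rabs (u x y) <= S0) by (intros; apply uu_global; auto).
  destruct (Mu_bounds u (2 * r) S0) as [M2le M2ge]. intros; apply Hglob.
  destruct (Mu_bounds u (4 * r) S0) as [M4le M4ge]. intros; apply Hglob.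
  destruct (Mu_bounds u r (exp (29/10 * k * r) + 2)) as [M1le M1ge]. intros; eapply uu_small; eauto.
  assert (M2S : S0 <= Mu u (2 * r)).
  { rewrite <- (Rabs_pos_eq S0) by lra. unfold S0. rewrite <- (uu_center k r Mn). apply M2ge. nra. }
  set (M1 := Mu u r) in *. set (M4 := Mu u (4 * r)) in *. set (M2 := Mu u (2 * r)) in *.
  assert (HM1 : 0 < M1).
  { destruct (Rle_or_lt M1 0); auto. unfold rpow in Hyp. destruct (Rle_dec M1 0); [|lra]. nra. }
  assert (HM4 : 0 < M4).
  { destruct (Rle_or_lt M4 0); auto. unfold rpow in Hyp. destruct (Rle_dec M4 0); [|lra]. nra. }
  unfold rpow, Rpower in Hyp. destruct (Rle_dec M1 0); [lra|]. destruct (Rle_dec M4 0); [lra|].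
  assert (HC : 0 <= C).
  { destruct (Rle_or_lt 0 C); auto.
    assert (0 < exp (alpha * ln M1) * exp ((1 - alpha) * ln M4)) by (apply Rmult_lt_0_compat; apply exp_pos).
    nra. }
  assert (H1 : exp ((1 - alpha) * ln M4) <= exp ((1 - alpha) * ln S0)).
  { apply exp_le_mono. apply Rmult_le_compat_l. lra. apply ln_le_mono; auto. }
  assert (H2 : exp (ln S0) <= C * exp (alpha * ln M1 + (1 - alpha) * ln S0)).
  { rewrite exp_ln by auto. rewrite exp_plus.
    assert (0 < exp (alpha * ln M1)) by apply exp_pos.
    assert (C * exp (alpha * ln M1) * exp ((1 - alpha) * ln M4) <= C * exp (alpha * ln M1) * exp ((1 - alpha) * ln S0)).
    { apply Rmult_le_compat_l; auto. apply Rmult_le_pos; lra. }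
    lra. }
  assert (H3 : exp (alpha * (ln S0 - ln M1)) <= C).
  { assert (E : exp (ln S0) = exp (alpha * (ln S0 - ln M1)) * exp (alpha * ln M1 + (1 - alpha) * ln S0)).
    { rewrite <- exp_plus. f_equal; ring. }
    rewrite E in H2. assert (0 < exp (alpha * ln M1 + (1 - alpha) * ln S0)) by apply exp_pos.
    apply Rmult_le_reg_r with (exp (alpha * ln M1 + (1 - alpha) * ln S0)); auto. }
  assert (Hkey : exp (k * r / 20) * M1 <= 4800 * S0).
  { assert (Ea : exp (29/10 * k * r) + 2 <= 3 * exp (29/10 * k * r)).
    { assert (1 <= exp (29/10 * k * r)). { rewrite <- exp_0. apply exp_le_mono. nra. } lra. }
    assert (Eb : 1 + k * r / 20 <= exp (k * r / 20)). { left. apply exp_ineq1. nra. }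
    assert (Ec : NN <= 800 * exp (k * r / 20)) by lra.
    assert (0 < exp (k * r / 20)) by apply exp_pos.
    apply Rle_trans with (exp (k * r / 20) * (3 * exp (29 / 10 * k * r))).
    { apply Rmult_le_compat_l; lra. }
    apply Rle_trans with (4800 * (exp (3 * k * r) / (2 * NN))); [| lra].
    replace (exp (3 * k * r)) with (exp (k * r / 20) * (exp (k * r / 20) * exp (29 / 10 * k * r))).
    2:{ rewrite <- !exp_plus. f_equal. field. }
    assert (0 < exp (29 / 10 * k * r)) by apply exp_pos.
    apply Rmult_le_reg_r with (2 * NN). lra.
    field_simplify; try lra.
    assert (0 < exp (k * r / 20) * exp (29 / 10 * k * r)) by (apply Rmult_lt_0_compat; auto).
    nra. }
  assert (Hlog : k * r / 20 - ln 4800 <= ln S0 - ln M1).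
  { assert (ln (exp (k * r / 20) * M1) <= ln (4800 * S0)).
    { apply ln_le_mono; auto. apply Rmult_lt_0_compat; auto. apply exp_pos. }
    rewrite !ln_mult, ln_exp in H by (try apply exp_pos; lra). lra. }
  assert (Hln : 0 < ln 4800). { rewrite <- ln_1. apply ln_increasing; lra. }
  eapply Rle_trans; [|apply H3].
  replace (1 / 4800) with (exp (- ln 4800)) by (rewrite exp_Ropp, exp_ln by lra; field).
  rewrite <- exp_plus. apply exp_le_mono.
  assert (alpha * (k * r / 20 - ln 4800) <= alpha * (ln S0 - ln M1)) by (apply Rmult_le_compat_l; lra).
  nra.
Qed.
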